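(* Let $q\ge2$ be a prime power and $d\ge6$. If either $1\le i\le d-5$ and $2\le j\le d$, or $i=d-4$ and $2\le j\le 4$, then $|Q_j(i)|>|Q_j(i+1)|$.
   Context: Let $b=-q$. For integers $m\ge0$ and $l$, ${m\brack l}_b=\prod_{t=1}^{l}\frac{b^{m-t+1}-1}{b^t-1}$ for $l\ge0$ and $0$ for $l<0$. For $0\le i,j\le d$, $$Q_j(i)=\sum_{h=0}^{\min\{j,d-i\}}(-1)^j(-q)^{\binom{j-h}{2}+hd}{d-h\brack d-j}_b{d-i\brack h}_b,$$ the eigenvalues of the Hermitian forms graph $Q_q(d,j)$ (vertices: $d\times d$ Hermitian matrices over $\mathbb F_{q^2}$, adjacent iff their difference has rank $j$). *)

(* Defs.v *)
From HB Require Import structures.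
From mathcomp Require Import all_boot all_order all_algebra.
Set Implicit Arguments. Unset Strict Implicit. Unset Printing Implicit Defensive.
Import Order.TTheory GRing.Theory Num.Theory.
Local Open Scope ring_scope.

Definition prime_power (q : nat) : Prop :=
  exists p k : nat, prime p /\ (0 < k)%N /\ q = (p ^ k)%N.

Definition bq (q : nat) : rat := - (q%:R).

(* For t <= m+1 the exponent m-t+1 = (m.+1 - t) is exact; if l > m the
   factor t = m+1 vanishes, so truncation for t > m+1 is irrelevant. *)
Definition gbin (b : rat) (m l : nat) : rat :=
  \prod_(1 <= t < l.+1) ((b ^+ (m.+1 - t)%N - 1) / (b ^+ t - 1)).

Definition Qeig (q d j i : nat) : rat :=
  \sum_(0 <= h < (minn j (d - i)).+1)
    ((-1) ^+ j * (bq q) ^+ ('C(j - h, 2) + h * d)%N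
       * gbin (bq q) (d - h) (d - j) * gbin (bq q) (d - i) h).

(* Main.v *)
Require Import Defs.
From HB Require Import structures.
From mathcomp Require Import all_boot all_order all_algebra.
From mathcomp Require Import ring lra zify.
Import Order.TTheory GRing.Theory Num.Theory.
Set Implicit Arguments. Unset Strict Implicit. Unset Printing Implicit Defensive.
Local Open Scope ring_scope.


Definition ee (x : rat) (n : nat) : rat := 1 - (- x) ^+ n.

Lemma ee_odd x n : odd n -> ee x n = 1 + x ^+ n.
Proof. by move=> on; rewrite /ee exprNn -signr_odd on expr1 mulN1r opprK. Qed.
Lemma ee_even x n : ~~ odd n -> ee x n = 1 - x ^+ n.
Proof. by move=> /negbTE on; rewrite /ee exprNn -signr_odd on expr0 mul1r. Qed.

Lemma xpow_le (x : rat) n k : 0 < x -> x <= 1/2 -> (k <= n)%N -> x ^+ n <= x ^+ k.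
Proof. move=> h0 h1 kn; apply: ler_wiXn2l => //; [exact: ltW | lra]. Qed.

Lemma xpow_ge0 (x : rat) n : 0 < x -> 0 <= x ^+ n.
Proof. move=> h; exact/exprn_ge0/ltW. Qed.

Lemma xpow_le1 (x : rat) n : 0 < x -> x <= 1/2 -> x ^+ n <= 1.
Proof. move=> h0 h1; apply: exprn_ile1; [exact: ltW|lra]. Qed.


Lemma ee0 x : ee x 0 = 0.
Proof. by rewrite /ee expr0 subrr. Qed.
Lemma ee1 x : ee x 1 = 1 + x.
Proof. by rewrite ee_odd // expr1. Qed.
Lemma ee2 x : ee x 2 = 1 - x ^+ 2.
Proof. by rewrite ee_even. Qed.
Lemma ee3 x : ee x 3 = 1 + x ^+ 3.
Proof. by rewrite ee_odd. Qed.

Ltac xfacts x n :=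
  idtac.

Lemma ee_lo1 x n : 0 < x -> x <= 1/2 -> (1 <= n)%N -> 1 - x ^+ 2 <= ee x n.
Proof.
move=> h0 h1 hn; case: (boolP (odd n)) => on.
  rewrite ee_odd //; have := xpow_ge0 n h0; have := xpow_ge0 2 h0; lra.
rewrite ee_even //; have : (2 <= n)%N by case: n hn on => [|[|]].
move=> h2; have := xpow_le h0 h1 h2; lra.
Qed.

Lemma ee_lo3 x n : 0 < x -> x <= 1/2 -> (3 <= n)%N -> 1 - x ^+ 4 <= ee x n.
Proof.
move=> h0 h1 hn; case: (boolP (odd n)) => on.
  rewrite ee_odd //; have := xpow_ge0 n h0; have := xpow_ge0 4 h0; lra.
rewrite ee_even //; have : (4 <= n)%N.
  by case: n hn on => [|[|[|[|]]]].
move=> h2; have := xpow_le h0 h1 h2; lra.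
Qed.

Lemma ee_hi0 x n : 0 < x -> x <= 1/2 -> ee x n <= 1 + x.
Proof.
move=> h0 h1; case: n => [|n]; first by rewrite ee0; lra.
case: (boolP (odd n.+1)) => on.
  rewrite ee_odd //; have := xpow_le h0 h1 (isT : (1 <= n.+1)%N); rewrite expr1; lra.
rewrite ee_even //; have := xpow_ge0 n.+1 h0; lra.
Qed.

Lemma ee_hi2 x n : 0 < x -> x <= 1/2 -> (2 <= n)%N -> ee x n <= 1 + x ^+ 3.
Proof.
move=> h0 h1 hn; case: (boolP (odd n)) => on.
  rewrite ee_odd //; have : (3 <= n)%N by case: n hn on => [|[|[|]]].
  move=> h3; have := xpow_le h0 h1 h3; lra.
rewrite ee_even //; have := xpow_ge0 n h0; have := xpow_ge0 3 h0; lra.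
Qed.

Lemma ee_hi4 x n : 0 < x -> x <= 1/2 -> (4 <= n)%N -> ee x n <= 1 + x ^+ 5.
Proof.
move=> h0 h1 hn; case: (boolP (odd n)) => on.
  rewrite ee_odd //; have : (5 <= n)%N by case: n hn on => [|[|[|[|[|]]]]].
  move=> h3; have := xpow_le h0 h1 h3; lra.
rewrite ee_even //; have := xpow_ge0 n h0; have := xpow_ge0 5 h0; lra.
Qed.

Lemma ee_ge0 x n : 0 < x -> x <= 1/2 -> 0 <= ee x n.
Proof.
move=> h0 h1; case: n => [|n]; first by rewrite ee0.
have := ee_lo1 h0 h1 (isT : (1 <= n.+1)%N); have : x ^+ 2 <= 1 by exact: xpow_le1. lra.
Qed.

Lemma ee_gt0 x n : 0 < x -> x <= 1/2 -> (1 <= n)%N -> 0 < ee x n.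
Proof.
move=> h0 h1 hn; have := ee_lo1 h0 h1 hn; have : x ^+ 2 <= 1/4.
  rewrite expr2; nra.
lra.
Qed.

Lemma pair_odd x n : 0 < x -> x <= 1/2 -> odd n ->
  1 <= ee x n * ee x n.+1 <= 1 + x ^+ n.
Proof.
move=> h0 h1 on; rewrite ee_odd // ee_even /= ?on // exprS.
have hn : (1 <= n)%N by case: n on.
have := xpow_le h0 h1 hn; rewrite expr1 => u1'.
set u := x ^+ n in u1' *.
have u0 : 0 <= u by exact: xpow_ge0.
have u1 : u <= 1/2 by lra.
apply/andP; split; nra.
Qed.

Lemma pair_even x n : 0 < x -> x <= 1/2 -> ~~ odd n ->
  1 - x ^+ n <= ee x n * ee x n.+1 <= 1.
Proof.
move=> h0 h1 on; rewrite ee_even // ee_odd /= ?(negbTE on) // exprS.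
set u := x ^+ n.
have u0 : 0 <= u by exact: xpow_ge0.
have u1 : u <= 1 by exact: xpow_le1.
have p1 : 0 <= (1 - u) * (x * u).
  apply: mulr_ge0; first lra. apply: mulr_ge0 => //; exact: ltW.
have p2 : 0 <= u * (1 - x + x * u).
  apply: mulr_ge0 => //. have : 0 <= x * u by apply: mulr_ge0 => //; exact: ltW. lra.
apply/andP; split; nra.
Qed.

Lemma pair_lo1 x n : 0 < x -> x <= 1/2 -> (1 <= n)%N -> 1 - x ^+ 2 <= ee x n * ee x n.+1.
Proof.
move=> h0 h1 hn; case: (boolP (odd n)) => on.
  have /andP[] := pair_odd h0 h1 on; have := xpow_ge0 2 h0; lra.
have /andP[] := pair_even h0 h1 on.
have : (2 <= n)%N by case: n hn on => [|[|]].
move=> h2; have := xpow_le h0 h1 h2; lra.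
Qed.

Lemma pair_hi1 x n : 0 < x -> x <= 1/2 -> (1 <= n)%N -> ee x n * ee x n.+1 <= 1 + x.
Proof.
move=> h0 h1 hn; case: (boolP (odd n)) => on.
  have /andP[] := pair_odd h0 h1 on; have := xpow_le h0 h1 hn; rewrite expr1; lra.
have /andP[] := pair_even h0 h1 on; lra.
Qed.

Lemma pair_hi2 x n : 0 < x -> x <= 1/2 -> (2 <= n)%N -> ee x n * ee x n.+1 <= 1 + x ^+ 3.
Proof.
move=> h0 h1 hn; case: (boolP (odd n)) => on.
  have /andP[] := pair_odd h0 h1 on.
  have : (3 <= n)%N by case: n hn on => [|[|[|]]].
  move=> h3; have := xpow_le h0 h1 h3; lra.
have /andP[] := pair_even h0 h1 on; have := xpow_ge0 3 h0; lra.
Qed.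


Lemma G1 (b : rat) n l : gbin b n l.+1 = gbin b n l * ((b ^+ (n - l) - 1) / (b ^+ l.+1 - 1)).
Proof. by rewrite /gbin big_nat_recr //= subSS. Qed.

Lemma G0 (b : rat) n : gbin b n 0 = 1.
Proof. by rewrite /gbin big_geq. Qed.

Lemma G2 (b : rat) n l : gbin b n l * (b ^+ n.+1 - 1) = gbin b n.+1 l * (b ^+ (n.+1 - l) - 1).
Proof.
elim: l => [|l IH]; first by rewrite !G0 subn0.
rewrite !G1 mulrAC IH subSS.
set A := gbin b n.+1 l; set B := b ^+ (n.+1 - l) - 1; set C := b ^+ (n - l) - 1.
set D := b ^+ l.+1 - 1.
ring.
Qed.

Definition Tt q d j m h : rat :=
  (-1) ^+ j * bq q ^+ ('C(j - h, 2) + h * d) * gbin (bq q) (d - h) (d - j) * gbin (bq q) m h.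

Lemma QeigE q d j i : Qeig q d j i = \sum_(0 <= h < (minn j (d - i)).+1) Tt q d j (d - i) h.
Proof. by []. Qed.

Lemma Tw q d j n h : Tt q d j n h * (bq q ^+ n.+1 - 1) = Tt q d j n.+1 h * (bq q ^+ (n.+1 - h) - 1).
Proof. by rewrite /Tt -!mulrA G2. Qed.

Lemma bn1_neq0 q n : (2 <= q)%N -> (1 <= n)%N -> bq q ^+ n - 1 != 0.
Proof.
move=> hq hn; rewrite subr_eq0 /bq exprNn.
apply/eqP => h.
have : `|(-1) ^+ n * (q%:R : rat) ^+ n| = 1 by rewrite h normr1.
rewrite normrM normrX normrN normr1 expr1n mul1r normrX ger0_norm ?ler0n //.
move/eqP; rewrite -natrX pnatr_eq1 => /eqP h1.
have : (q ^ 1 <= q ^ n)%N by apply: leq_pexp2l => //; lia.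
rewrite h1 expn1; lia.
Qed.

Lemma rearr (s P P2 g1 k1 A B g0 k0 C D : rat) : g1 * A = g0 * C -> k1 * B = k0 * D ->
  s * (P * P2) * g1 * k1 * (A * B) = s * P * g0 * k0 * (P2 * (C * D)).
Proof.
move=> h1 h2.
have -> : s * (P * P2) * g1 * k1 * (A * B) = s * P * P2 * (g1 * A) * (k1 * B) by ring.
rewrite h1 h2; ring.
Qed.

Lemma Tr q d j m h : (2 <= q)%N -> (h < j)%N -> (j <= d)%N ->
  Tt q d j m h.+1 * ((bq q ^+ (d - h) - 1) * (bq q ^+ h.+1 - 1)) =
  Tt q d j m h * (bq q ^+ (d + h.+1 - j) * ((bq q ^+ (j - h) - 1) * (bq q ^+ (m - h) - 1))).
Proof.
move=> hq hj jd.
have e1 : ('C(j - h.+1, 2) + h.+1 * d = ('C(j - h, 2) + h * d) + (d + h.+1 - j))%N.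
  have -> : (j - h = (j - h.+1).+1)%N by lia.
  rewrite binS bin1 mulSn; lia.
have e2 := G2 (bq q) (d - h.+1) (d - j).
have E1 : ((d - h.+1).+1 = d - h)%N by lia.
have E2 : (d - h - (d - j) = j - h)%N by lia.
rewrite E1 E2 in e2.
have e3 : gbin (bq q) m h.+1 * (bq q ^+ h.+1 - 1) = gbin (bq q) m h * (bq q ^+ (m - h) - 1).
  rewrite G1 -!mulrA mulVf ?mulr1 //; exact: bn1_neq0.
rewrite /Tt e1 exprD; exact: rearr.
Qed.


Definition xq (q : nat) : rat := (q%:R)^-1.

Lemma xq_pos q : (2 <= q)%N -> 0 < xq q.
Proof. move=> hq; rewrite /xq invr_gt0 ltr0n; lia. Qed.

Lemma xq_le q : (2 <= q)%N -> xq q <= 1/2.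
Proof.
move=> hq; rewrite /xq mul1r lef_pV2 ?ler_nat ?posrE ?ltr0n //; lia.
Qed.

Lemma Qx q n : (2 <= q)%N -> (q%:R : rat) ^+ n * xq q ^+ n = 1.
Proof.
move=> hq; rewrite -exprMn /xq divff ?expr1n // pnatr_eq0; lia.
Qed.

Lemma normb q n : (2 <= q)%N -> `|bq q ^+ n - 1| = (q%:R : rat) ^+ n * ee (xq q) n.
Proof.
move=> hq; have hQ := Qx n hq.
have Q1 : (1 : rat) <= (q%:R) ^+ n by rewrite -natrX ler1n expn_gt0; apply/orP; left; lia.
rewrite /bq exprNn -signr_odd.
case: (boolP (odd n)) => on.
  rewrite ee_odd // expr1 mulN1r -opprD normrN ger0_norm; last lra.
  by rewrite mulrDr mulr1 hQ.
rewrite ee_even // expr0 mul1r ger0_norm; last lra.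
by rewrite mulrBr mulr1 hQ.
Qed.

Lemma normbq q n : `|bq q ^+ n| = (q%:R : rat) ^+ n.
Proof. by rewrite normrX /bq normrN ger0_norm ?ler0n. Qed.

Lemma ratio_alg (a0 a1 K1 K2 Q3 Q4 Q5 x5 eA eB eC eD : rat) :
  Q3 * Q4 = K1 * K2 -> K1 * K2 != 0 -> Q5 * x5 = 1 -> eC * eD != 0 ->
  a1 * (K1 * eA * (K2 * eB)) = a0 * (Q3 * (Q4 * eC * (Q5 * eD))) ->
  a0 = a1 * (x5 * eA * eB / (eC * eD)).
Proof.
move=> hQ nK hx nE H.
have h1 : a1 * eA * eB * (K1 * K2) = a0 * eC * eD * Q5 * (K1 * K2).
  have -> : a1 * eA * eB * (K1 * K2) = a1 * (K1 * eA * (K2 * eB)) by ring.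
  rewrite H -hQ; ring.
have h2 := mulIf nK h1.
have -> : a1 * (x5 * eA * eB / (eC * eD)) = (a1 * eA * eB) * x5 / (eC * eD) by ring.
rewrite h2.
have -> : a0 * eC * eD * Q5 * x5 / (eC * eD) = a0 * (Q5 * x5) * ((eC * eD) / (eC * eD)) by ring.
by rewrite hx divff // !mulr1.
Qed.

Lemma ee_neq0 q n : (2 <= q)%N -> (1 <= n)%N -> ee (xq q) n != 0.
Proof. move=> hq hn; rewrite gt_eqF //; apply: ee_gt0 hn; [exact: xq_pos | exact: xq_le]. Qed.

Lemma Qn_neq0 q n : (2 <= q)%N -> (q%:R : rat) ^+ n != 0.
Proof. move=> hq; rewrite expf_neq0 // pnatr_eq0; lia. Qed.

Lemma a_ratio q d j m h : (2 <= q)%N -> (h < j)%N -> (j <= d)%N -> (h < m)%N ->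
  `|Tt q d j m h| = `|Tt q d j m h.+1| *
     (xq q ^+ (m - h) * ee (xq q) (d - h) * ee (xq q) h.+1 /
       (ee (xq q) (j - h) * ee (xq q) (m - h))).
Proof.
move=> hq hj jd hm.
have H0 := Tr m hq hj jd.
set t1 := Tt q d j m h.+1 in H0 *; set t0 := Tt q d j m h in H0 *; clearbody t1 t0.
have /= H := congr1 (fun z : rat => `|z|) H0.
rewrite !normrM !normbq !normb // in H.
apply: (ratio_alg _ _ _ _ H).
- rewrite -!exprD; congr (_ ^+ _); lia.
- rewrite mulf_neq0 // Qn_neq0 //.
- exact: Qx.
- rewrite mulf_neq0 // ee_neq0 //; lia.
Qed.


Lemma w_alg (t a Qa Qh Qn xh ea en : rat) :
  Qa * Qh = Qn -> Qh * xh = 1 -> Qn != 0 -> en != 0 ->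
  t * (Qn * en) = a * (Qa * ea) -> t = a * (xh * ea / en).
Proof.
move=> hQ hx nQ nE H.
have h1 : t * en * Qn = a * ea * xh * Qn.
  have -> : t * en * Qn = t * (Qn * en) by ring.
  rewrite H -hQ.
  have -> : a * ea * xh * (Qa * Qh) = a * (Qa * ea) * (Qh * xh) by ring.
  by rewrite hx mulr1.
have h2 := mulIf nQ h1.
have -> : t = t * en / en by rewrite mulfK.
rewrite h2; ring.
Qed.

Lemma Tw_norm q d j n h : (2 <= q)%N -> (h <= n.+1)%N ->
  `|Tt q d j n h| = `|Tt q d j n.+1 h| * (xq q ^+ h * ee (xq q) (n.+1 - h) / ee (xq q) n.+1).
Proof.
move=> hq hh.
have H0 := Tw q d j n h.
set t1 := Tt q d j n.+1 h in H0 *; set t0 := Tt q d j n h in H0 *; clearbody t1 t0.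
have /= H := congr1 (fun z : rat => `|z|) H0.
rewrite !normrM !normb // in H.
apply: (w_alg (Qh := (q%:R : rat) ^+ h) _ _ _ _ H).
- rewrite -exprD; congr (_ ^+ _); lia.
- exact: Qx.
- exact: Qn_neq0.
- exact: ee_neq0.
Qed.


Lemma tail_bound (a : nat -> rat) k : (forall h, 0 <= a h) ->
  (forall h, (h.+2 <= k.+1)%N -> a h <= a h.+1 / 4) ->
  \sum_(0 <= h < k.+1) a h <= 4/3 * a k.
Proof.
move=> a0 ha.
have : forall n, (n <= k)%N -> \sum_(0 <= h < n.+1) a h <= 4/3 * a n.
  elim=> [|n IH] hn.
    rewrite big_nat1; have := a0 0%N; lra.
  rewrite big_nat_recr //=.
  have := IH (ltnW hn); have := ha n (hn : (n.+2 <= k.+1)%N); have := a0 n.+1; lra.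
by apply.
Qed.

Lemma main_bound (a w : nat -> rat) (k : nat) (r1 r2 c W0 W1 W2 : rat) :
 (forall h, 0 <= a h) ->
 (forall h, (h < k)%N -> 0 <= w h <= 1) ->
 0 <= w k.+1 <= W1 -> 0 <= w k <= W2 -> w k.+2 <= W0 ->
 a k.+1 <= r1 * a k.+2 -> a k <= r2 * a k.+2 ->
 ((0 < k)%N -> a k.-1 <= c * a k) ->
 (forall h, (h.+2 <= k)%N -> a h <= a h.+1 / 4) ->
 0 <= c ->
 \sum_(0 <= h < k.+2) a h * (1 + w h) + a k.+2 * w k.+2 <=
  (r1 * (1 + W1) + r2 * (1 + W2 + 8/3 * c) + W0) * a k.+2.
Proof.
move=> a0 hw /andP[w1a w1b] /andP[w2a w2b] hw0 hr1 hr2 hc htail c0.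
have tail : \sum_(0 <= h < k) a h * (1 + w h) <= 8/3 * c * a k.
  have -> : 8/3 * c * a k = 2 * (4/3 * c * a k) by ring.
  apply: (@le_trans _ _ (\sum_(0 <= h < k) 2 * a h)).
    rewrite big_nat [X in _ <= X]big_nat; apply: ler_sum => h /andP[_ hk].
    have /andP[] := hw h hk; have := a0 h; nra.
  rewrite -mulr_sumr ler_pM2l //.
  case: k hw w1a w1b w2a w2b hw0 hr1 hr2 hc htail => [|k] _ _ _ _ _ _ _ _ hc htail.
    by rewrite big_geq //; apply: mulr_ge0 => //; apply: mulr_ge0 => //.
  apply: (le_trans (tail_bound a0 htail)).
  have := hc isT; rewrite /=; lra.
rewrite big_nat_recr //= big_nat_recr //=.
have t1 : a k.+1 * (1 + w k.+1) <= r1 * a k.+2 * (1 + W1).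
  have := a0 k.+1; have := a0 k.+2; nra.
have t2 : a k * (1 + w k) <= r2 * a k.+2 * (1 + W2).
  have := a0 k; have := a0 k.+2; nra.
have t3 : a k.+2 * w k.+2 <= W0 * a k.+2 by have := a0 k.+2; nra.
have t4 : c * a k <= c * (r2 * a k.+2) by apply: ler_wpM2l.
nra.
Qed.

Definition aa q d j m h := `|Tt q d j m h|.
Definition ww q m h := xq q ^+ h * ee (xq q) (m - h) / ee (xq q) m.

Lemma ww_ge0 q m h : (2 <= q)%N -> 0 <= ww q m h.
Proof.
move=> hq; rewrite /ww; have x0 := xq_pos hq; have x1 := xq_le hq.
apply: divr_ge0; [apply: mulr_ge0 | ]; by [exact: xpow_ge0 | exact: ee_ge0].
Qed.

Lemma reduce q d j n : (2 <= q)%N ->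
  \sum_(0 <= h < minn j n.+1) aa q d j n.+1 h * (1 + ww q n.+1 h) +
    aa q d j n.+1 (minn j n.+1) * ww q n.+1 (minn j n.+1) < aa q d j n.+1 (minn j n.+1) ->
  `|\sum_(0 <= h < (minn j n).+1) Tt q d j n h| <
  `|\sum_(0 <= h < (minn j n.+1).+1) Tt q d j n.+1 h|.
Proof.
move=> hq hS.
set H := minn j n.+1 in hS *.
have HH : (minn j n <= H)%N by rewrite /H; lia.
have up : `|\sum_(0 <= h < (minn j n).+1) Tt q d j n h| <=
    \sum_(0 <= h < H) aa q d j n.+1 h * ww q n.+1 h + aa q d j n.+1 H * ww q n.+1 H.
  apply: (le_trans (ler_norm_sum _ _ _)).
  rewrite -big_nat_recr //=.
  rewrite (big_cat_nat (n := (minn j n).+1) (leq0n _) (HH : ((minn j n).+1 <= H.+1)%N)) /=.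
  rewrite -[X in X <= _]addr0; apply: lerD.
    rewrite big_nat [X in _ <= X]big_nat; apply: ler_sum => h /andP[_ hk].
    have hh : (h <= n.+1)%N by lia.
    by rewrite /aa /ww (Tw_norm d j hq hh) mulrA.
  apply: sumr_ge0 => h _; apply: mulr_ge0; [exact: normr_ge0 | exact: ww_ge0].
have lo : aa q d j n.+1 H - \sum_(0 <= h < H) aa q d j n.+1 h <=
    `|\sum_(0 <= h < H.+1) Tt q d j n.+1 h|.
  rewrite big_nat_recr //= addrC.
  apply: (le_trans _ (lerB_normD _ _)).
  rewrite /aa lerB //; exact: ler_norm_sum.
have sp : \sum_(0 <= h < H) aa q d j n.+1 h * (1 + ww q n.+1 h) =
   \sum_(0 <= h < H) aa q d j n.+1 h + \sum_(0 <= h < H) aa q d j n.+1 h * ww q n.+1 h.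
  rewrite -big_split /=; apply: eq_bigr => h _; ring.
lra.
Qed.


Lemma frac_le (N D K L U : rat) : 0 <= N -> N <= U -> 0 < L -> L <= D -> U <= K * L -> 0 <= K ->
  N / D <= K.
Proof.
move=> n0 nU l0 lD uK k0; have d0 : 0 < D by exact: (lt_le_trans l0 lD).
rewrite ler_pdivrMr //; apply: (le_trans nU); apply: (le_trans uK).
exact: ler_wpM2l.
Qed.

Lemma prod_le (a b A B : rat) : 0 <= a -> a <= A -> 0 <= b -> b <= B -> a * b <= A * B.
Proof. move=> a0 aA b0 bB; apply: ler_pM => //. Qed.

Lemma prod_ge (a b A B : rat) : 0 <= A -> A <= a -> 0 <= B -> B <= b -> A * B <= a * b.
Proof. move=> a0 aA b0 bB; apply: ler_pM => //. Qed.


Ltac nlia := repeat match goal with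
  | [ H : is_true (@Order.le _ _ _ _) |- _ ] => clear H
  | [ H : is_true (@Order.lt _ _ _ _) |- _ ] => clear H end; lia.

Lemma poly1 (x : rat) : 0 < x -> x <= 1/2 -> x <= 4/9 * ((1 - x ^+ 2) * (1 + x)).
Proof.
move=> h0 h1; have h2 : x ^+ 2 <= 1/4 by rewrite expr2; nra.
have h3 : x ^+ 3 <= 1/8 by rewrite exprS; nra.
have -> : (1 - x ^+ 2) * (1 + x) = 1 + x - x ^+ 2 - x ^+ 3 by rewrite exprS; ring.
lra.
Qed.

Lemma xb (x : rat) : 0 < x -> x <= 1/2 ->
  [/\ x ^+ 2 <= 1/4, x ^+ 3 <= 1/8, x ^+ 4 <= 1/16 & x ^+ 5 <= 1/32].
Proof.
move=> h0 h1.
have h2 : x ^+ 2 <= 1/4 by rewrite expr2; nra.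
have g2 : 0 <= x ^+ 2 by exact: xpow_ge0.
have h3 : x ^+ 3 <= 1/8 by rewrite exprS; nra.
have g3 : 0 <= x ^+ 3 by exact: xpow_ge0.
have h4 : x ^+ 4 <= 1/16 by rewrite exprS; nra.
have g4 : 0 <= x ^+ 4 by exact: xpow_ge0.
have h5 : x ^+ 5 <= 1/32 by rewrite exprS; nra.
by [].
Qed.

Lemma ee_nn x n : 0 < x -> x <= 1/2 -> 0 <= ee x n.
Proof. exact: ee_ge0. Qed.

Lemma L_rA1 x e n1 n2 n3 : 0 < x -> x <= 1/2 -> (1 <= e)%N -> (2 <= n1)%N -> (4 <= n2)%N ->
  (1 <= n3)%N ->
  x ^+ e * ee x n1 * ee x n2 / (ee x n3 * ee x 1) <= 33/64.
Proof.
move=> h0 h1 he hn1 hn2 hn3; have [b2 b3 b4 b5] := xb h0 h1.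
have g := xpow_ge0 e h0.
have en1 := ee_nn n1 h0 h1; have en2 := ee_nn n2 h0 h1.
apply: (@frac_le _ _ _ ((1 - x ^+ 2) * (1 + x)) (x * ((1 + x ^+ 3) * (1 + x ^+ 5)))).
- by apply: mulr_ge0 => //; apply: mulr_ge0.
- rewrite -mulrA; apply: prod_le => //; first by have := xpow_le h0 h1 he; rewrite expr1.
  + by apply: mulr_ge0.
  + apply: prod_le => //; [(apply: ee_hi2 => //; nlia) | (apply: ee_hi4 => //; nlia)].
- apply: mulr_gt0; lra.
- rewrite ee1; apply: prod_ge; [lra | (apply: ee_lo1 => //; nlia) | lra | lra].
- have p := poly1 h0 h1.
  have q1 : (1 + x ^+ 3) * (1 + x ^+ 5) <= 9/8 * (33/32).
    apply: prod_le; try lra; have := xpow_ge0 3 h0; have := xpow_ge0 5 h0; lra.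
  have := prod_le (ltW h0) p (_ : 0 <= (1 + x ^+ 3) * (1 + x ^+ 5)) q1.
  have : 0 <= (1 + x ^+ 3) * (1 + x ^+ 5).
    apply: mulr_ge0; have := xpow_ge0 3 h0; have := xpow_ge0 5 h0; lra.
  move=> hh /(_ hh); lra.
- lra.
Qed.

Lemma L_rB1 x e n1 n2 n3 : 0 < x -> x <= 1/2 -> (2 <= e)%N -> (3 <= n1)%N -> (2 <= n2)%N ->
  (2 <= n3)%N ->
  x ^+ e * ee x n1 * ee x n2 / (ee x 1 * ee x n3) <= 9/32.
Proof.
move=> h0 h1 he hn1 hn2 hn3; have [b2 b3 b4 b5] := xb h0 h1.
have g := xpow_ge0 e h0; have g3 := xpow_ge0 3 h0.
have en1 := ee_nn n1 h0 h1; have en2 := ee_nn n2 h0 h1.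
apply: (@frac_le _ _ _ ((1 + x) * (1 - x ^+ 2)) ((x * x) * ((1 + x ^+ 3) * (1 + x ^+ 3)))).
- by apply: mulr_ge0 => //; apply: mulr_ge0.
- rewrite -mulrA; apply: prod_le => //.
  + by have := xpow_le h0 h1 he; rewrite expr2.
  + by apply: mulr_ge0.
  + apply: prod_le => //; [(apply: ee_hi2 => //; nlia) | (apply: ee_hi2 => //; nlia)].
- apply: mulr_gt0; lra.
- rewrite ee1; apply: prod_ge; [lra | lra | lra | (apply: ee_lo1 => //; nlia)].
- have p := poly1 h0 h1.
  have p2 : x * x <= 1/2 * (4/9 * ((1 - x ^+ 2) * (1 + x))).
    apply: prod_le => //; lra.
  have q1 : (1 + x ^+ 3) * (1 + x ^+ 3) <= 9/8 * (9/8) by apply: prod_le; lra.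
  have q0 : 0 <= (1 + x ^+ 3) * (1 + x ^+ 3) by apply: mulr_ge0; lra.
  have := prod_le (mulr_ge0 (ltW h0) (ltW h0)) p2 q0 q1.
  rewrite [(1 + x) * _]mulrC; lra.
- lra.
Qed.

Lemma L_rA2 x e1 e2 s t u : 0 < x -> x <= 1/2 -> (2 <= e1)%N -> (1 <= e2)%N -> (2 <= s)%N ->
  (3 <= t)%N -> (1 <= u)%N ->
  (x ^+ e1 * ee x s.+1 * ee x t / (ee x u.+1 * ee x 2)) *
  (x ^+ e2 * ee x s * ee x t.+1 / (ee x u * ee x 1)) <= 3/16.
Proof.
move=> h0 h1 he1 he2 hs ht hu; have [b2 b3 b4 b5] := xb h0 h1.
have g1 := xpow_ge0 e1 h0; have g2 := xpow_ge0 e2 h0; have g3 := xpow_ge0 3 h0.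
have gx2 := xpow_ge0 2 h0.
have -> : (x ^+ e1 * ee x s.+1 * ee x t / (ee x u.+1 * ee x 2)) *
  (x ^+ e2 * ee x s * ee x t.+1 / (ee x u * ee x 1)) =
  (x ^+ e1 * x ^+ e2) * (ee x s * ee x s.+1) * (ee x t * ee x t.+1) /
   ((ee x u * ee x u.+1) * (ee x 1 * ee x 2)) by rewrite !invfM; ring.
have ps0 : 0 <= ee x s * ee x s.+1 by apply: mulr_ge0; exact: ee_nn.
have pt0 : 0 <= ee x t * ee x t.+1 by apply: mulr_ge0; exact: ee_nn.
apply: (@frac_le _ _ _ ((1 - x ^+ 2) * ((1 + x) * (1 - x ^+ 2)))
   ((x ^+ 2 * x) * (1 + x ^+ 3) * (1 + x ^+ 3))).
- by apply: mulr_ge0 => //; apply: mulr_ge0 => //; apply: mulr_ge0.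
- apply: prod_le => //.
  + by apply: mulr_ge0 => //; apply: mulr_ge0.
  + apply: prod_le => //; first by apply: mulr_ge0.
    * apply: prod_le => //; first exact: xpow_le h0 h1 he1.
      by have := xpow_le h0 h1 he2; rewrite expr1.
    * (apply: pair_hi2 => //; nlia).
  + apply: pair_hi2 => //; nlia.
- apply: mulr_gt0; [lra | apply: mulr_gt0; lra].
- rewrite ee1 ee2; apply: prod_ge; [lra | (apply: pair_lo1 => //; nlia) | | lra].
    apply: mulr_ge0; lra.
- have p := poly1 h0 h1.
  have p2 : x ^+ 2 <= 1/3 * (1 - x ^+ 2) by lra.
  have p3 : x ^+ 2 * x <= 1/3 * (1 - x ^+ 2) * (4/9 * ((1 - x ^+ 2) * (1 + x))).
    by apply: prod_le => //; exact: ltW.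
  have q1 : (1 + x ^+ 3) * (1 + x ^+ 3) <= 9/8 * (9/8) by apply: prod_le; lra.
  have q0 : 0 <= (1 + x ^+ 3) * (1 + x ^+ 3) by apply: mulr_ge0; lra.
  have := prod_le (mulr_ge0 gx2 (ltW h0)) p3 q0 q1.
  have -> : 1/3 * (1 - x ^+ 2) * (4/9 * ((1 - x ^+ 2) * (1 + x))) * (9/8 * (9/8)) =
     3/16 * ((1 - x ^+ 2) * ((1 + x) * (1 - x ^+ 2))) by field.
  by move=> HH; rewrite -mulrA.
- lra.
Qed.

Lemma L_cA x e n1 n2 n3 : 0 < x -> x <= 1/2 -> (3 <= e)%N -> (2 <= n1)%N -> (2 <= n2)%N ->
  (3 <= n3)%N ->
  x ^+ e * ee x n1 * ee x n2 / (ee x n3 * ee x 3) <= 27/160.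
Proof.
move=> h0 h1 he hn1 hn2 hn3; have [b2 b3 b4 b5] := xb h0 h1.
have g := xpow_ge0 e h0; have g3 := xpow_ge0 3 h0; have g4 := xpow_ge0 4 h0.
have en1 := ee_nn n1 h0 h1; have en2 := ee_nn n2 h0 h1.
apply: (@frac_le _ _ _ ((1 - x ^+ 4) * 1) (x ^+ 3 * (1 + x ^+ 3) * (1 + x ^+ 3))).
- by apply: mulr_ge0 => //; apply: mulr_ge0.
- apply: prod_le => //; first by apply: mulr_ge0.
  + apply: prod_le => //; [exact: xpow_le h0 h1 he | (apply: ee_hi2 => //; nlia)].
  + (apply: ee_hi2 => //; nlia).
- lra.
- rewrite ee3; apply: prod_ge; [lra | (apply: ee_lo3 => //; nlia) | lra | lra].
- have q1 : x ^+ 3 * (1 + x ^+ 3) <= 1/8 * (9/8) by apply: prod_le; lra.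
  have := prod_le (mulr_ge0 g3 (_ : 0 <= 1 + x ^+ 3)) q1 (_ : 0 <= 1 + x ^+ 3) (_ : 1 + x ^+ 3 <= 9/8).
  move=> /(_ ltac:(lra) ltac:(lra) ltac:(lra)); lra.
- lra.
Qed.

Lemma L_rB2 x e1 e2 s t u : 0 < x -> x <= 1/2 -> (3 <= e1)%N -> (2 <= e2)%N -> (3 <= s)%N ->
  (1 <= t)%N -> (2 <= u)%N ->
  (x ^+ e1 * ee x s.+1 * ee x t / (ee x 2 * ee x u.+1)) *
  (x ^+ e2 * ee x s * ee x t.+1 / (ee x 1 * ee x u)) <= 1/16.
Proof.
move=> h0 h1 he1 he2 hs ht hu; have [b2 b3 b4 b5] := xb h0 h1.
have g1 := xpow_ge0 e1 h0; have g2 := xpow_ge0 e2 h0; have g3 := xpow_ge0 3 h0.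
have g5 := xpow_ge0 5 h0.
have -> : (x ^+ e1 * ee x s.+1 * ee x t / (ee x 2 * ee x u.+1)) *
  (x ^+ e2 * ee x s * ee x t.+1 / (ee x 1 * ee x u)) =
  (x ^+ e1 * x ^+ e2) * (ee x s * ee x s.+1) * (ee x t * ee x t.+1) /
   ((ee x 1 * ee x 2) * (ee x u * ee x u.+1)) by rewrite !invfM; ring.
have ps0 : 0 <= ee x s * ee x s.+1 by apply: mulr_ge0; exact: ee_nn.
have pt0 : 0 <= ee x t * ee x t.+1 by apply: mulr_ge0; exact: ee_nn.
apply: (@frac_le _ _ _ (((1 + x) * (1 - x ^+ 2)) * (1 - x ^+ 2))
   (x ^+ 5 * (1 + x ^+ 3) * (1 + x))).
- by apply: mulr_ge0 => //; apply: mulr_ge0 => //; apply: mulr_ge0.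
- apply: prod_le.
  + apply: mulr_ge0 => //; exact: mulr_ge0.
  + apply: prod_le.
    * exact: mulr_ge0.
    * rewrite (_ : 5%N = (3 + 2)%N) // exprD; apply: prod_le.
      -- exact: g1.
      -- exact: xpow_le h0 h1 he1.
      -- exact: g2.
      -- exact: xpow_le h0 h1 he2.
    * exact: ps0.
    * apply: (pair_hi2 h0 h1); nlia.
  + exact: pt0.
  + by apply: pair_hi1.
- apply: mulr_gt0; [apply: mulr_gt0; lra | lra].
- rewrite ee1 ee2; apply: prod_ge; [ | lra | lra | apply: pair_lo1 => //; nlia].
  apply: mulr_ge0; lra.
- have q1 : x ^+ 5 * (1 + x ^+ 3) <= 1/32 * (9/8) by apply: prod_le; lra.
  have q2 : 3/4 * (3/4) <= (1 - x ^+ 2) * (1 - x ^+ 2) by apply: prod_ge; lra.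
  have q3 : x ^+ 5 * (1 + x ^+ 3) * (1 + x) <= 1/32 * (9/8) * (1 + x).
    apply: ler_wpM2r => //; lra.
  have q4 : (1 + x) * (9/16) <= (1 + x) * ((1 - x ^+ 2) * (1 - x ^+ 2)).
    apply: ler_wpM2l => //; lra.
  have -> : (1 + x) * (1 - x ^+ 2) * (1 - x ^+ 2) = (1 + x) * ((1 - x ^+ 2) * (1 - x ^+ 2)) by ring.
  lra.
- lra.
Qed.

Lemma L_r4 x e n1 n2 n3 n4 : 0 < x -> x <= 1/2 -> (4 <= e)%N -> (1 <= n3)%N -> (1 <= n4)%N ->
  x ^+ e * ee x n1 * ee x n2 / (ee x n3 * ee x n4) <= 1/4.
Proof.
move=> h0 h1 he hn3 hn4; have [b2 b3 b4 b5] := xb h0 h1.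
have g := xpow_ge0 e h0; have g4 := xpow_ge0 4 h0.
have en1 := ee_nn n1 h0 h1; have en2 := ee_nn n2 h0 h1.
apply: (@frac_le _ _ _ ((1 - x ^+ 2) * (1 - x ^+ 2)) (x ^+ 4 * (1 + x) * (1 + x))).
- by apply: mulr_ge0 => //; apply: mulr_ge0.
- apply: prod_le => //; first by apply: mulr_ge0.
  + apply: prod_le => //; [exact: xpow_le h0 h1 he | (apply: ee_hi0 => //; nlia)].
  + (apply: ee_hi0 => //; nlia).
- apply: mulr_gt0; lra.
- apply: prod_ge; [lra | (apply: ee_lo1 => //; nlia) | lra | (apply: ee_lo1 => //; nlia)].
- have q1 : x ^+ 4 * (1 + x) <= 1/16 * (3/2) by apply: prod_le; lra.
  have q2 : x ^+ 4 * (1 + x) * (1 + x) <= 1/16 * (3/2) * (3/2).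
    apply: prod_le => //; try lra; apply: mulr_ge0 => //; lra.
  have q3 : 3/4 * (3/4) <= (1 - x ^+ 2) * (1 - x ^+ 2) by apply: prod_ge; lra.
  lra.
- lra.
Qed.

Lemma L_w x h n m (A B K : rat) : 0 < x -> x <= 1/2 -> (3 <= m)%N ->
  x ^+ h <= A -> ee x n <= B -> A * B <= K * (15/16) -> 0 <= K ->
  x ^+ h * ee x n / ee x m <= K.
Proof.
move=> h0 h1 hm hA hB hK k0; have [b2 b3 b4 b5] := xb h0 h1.
have g := xpow_ge0 h h0; have en := ee_nn n h0 h1.
apply: (@frac_le _ _ _ (15/16) (A * B)).
- by apply: mulr_ge0.
- apply: prod_le => //.
- lra.
- have := ee_lo3 h0 h1 hm; lra.
- exact: hK.
- exact: k0.
Qed.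


Lemma gbin_neq0 q n l : (2 <= q)%N -> (l <= n)%N -> gbin (bq q) n l != 0.
Proof.
move=> hq hl; rewrite /gbin prodf_seq_neq0; apply/allP => t.
rewrite mem_index_iota => /andP[t1 t2] /=.
rewrite mulf_neq0 // ?invr_eq0; apply: bn1_neq0 => //; lia.
Qed.

Lemma Tt_neq0 q d j m H : (2 <= q)%N -> (H <= j)%N -> (H <= m)%N -> (j <= d)%N ->
  Tt q d j m H != 0.
Proof.
move=> hq hj hm jd; rewrite /Tt !mulf_neq0 //.
- by rewrite signr_eq0.
- rewrite expf_neq0 // /bq oppr_eq0 pnatr_eq0; lia.
- apply: gbin_neq0 => //; lia.
- exact: gbin_neq0.
Qed.

Lemma ww_le1 q m h : (2 <= q)%N -> (3 <= m)%N -> ww q m h <= 1.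
Proof.
move=> hq hm; have h0 := xq_pos hq; have h1 := xq_le hq.
case: h => [|h].
  rewrite /ww expr0 mul1r subn0 divff //; exact: ee_neq0 (ltnW (ltnW hm)).
rewrite /ww; apply: (@L_w _ _ _ _ (1/2) (3/2)).
- exact: h0.
- exact: h1.
- exact: hm.
- have := xpow_le h0 h1 (isT : (1 <= h.+1)%N); rewrite expr1; lra.
- have := ee_hi0 (m - h.+1) h0 h1; lra.
- lra.
- lra.
Qed.

Lemma a_le q d j m h K : (2 <= q)%N -> (h < j)%N -> (j <= d)%N -> (h < m)%N ->
  xq q ^+ (m - h) * ee (xq q) (d - h) * ee (xq q) h.+1 /
       (ee (xq q) (j - h) * ee (xq q) (m - h)) <= K ->
  aa q d j m h <= K * aa q d j m h.+1.
Proof.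
move=> hq hj jd hm hK; rewrite /aa (a_ratio hq hj jd hm) mulrC.
by apply: ler_wpM2r => //; exact: normr_ge0.
Qed.

Lemma a_le2 q d j m h K : (2 <= q)%N -> (h.+1 < j)%N -> (j <= d)%N -> (h.+1 < m)%N ->
  (xq q ^+ (m - h) * ee (xq q) (d - h) * ee (xq q) h.+1 /
       (ee (xq q) (j - h) * ee (xq q) (m - h))) *
  (xq q ^+ (m - h.+1) * ee (xq q) (d - h.+1) * ee (xq q) h.+2 /
       (ee (xq q) (j - h.+1) * ee (xq q) (m - h.+1))) <= K ->
  aa q d j m h <= K * aa q d j m h.+2.
Proof.
move=> hq hj jd hm hK.
have hj' : (h < j)%N by lia. have hm' : (h < m)%N by lia.
rewrite /aa (a_ratio hq hj' jd hm') (a_ratio hq hj jd hm) -mulrA mulrC.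
apply: ler_wpM2r; [exact: normr_ge0 | by rewrite mulrC].
Qed.

Lemma caseA q d j i k : (2 <= q)%N -> (1 <= i)%N -> d = (i + k.+2)%N -> (k.+2 <= j)%N ->
  (j <= d)%N -> (2 <= k)%N ->
  \sum_(0 <= h < k.+2) aa q d j k.+2 h * (1 + ww q k.+2 h) +
    aa q d j k.+2 k.+2 * ww q k.+2 k.+2 < aa q d j k.+2 k.+2.
Proof.
move=> hq hi hd hj hjd hk.
have h0 := xq_pos hq; have h1 := xq_le hq; have [b2 b3 b4 b5] := xb h0 h1.
have apos : 0 < aa q d j k.+2 k.+2.
  rewrite /aa normr_gt0; apply: Tt_neq0 => //.
have Ek1 : (k.+2 - k.+1 = 1)%N by rewrite subSS subSnn.
have Ek2 : (k.+2 - k = 2)%N by nlia.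
apply: (le_lt_trans (main_bound (a := aa q d j k.+2) (w := ww q k.+2) (k := k)
   (r1 := 33/64) (r2 := 3/16) (c := 27/160) (W0 := 0) (W1 := 1/5) (W2 := 4/15)
   _ _ _ _ _ _ _ _ _ _)); last lra.
- move=> h; exact: normr_ge0.
- move=> h _; rewrite ww_ge0 // ww_le1 //; nlia.
- apply/andP; split; first exact: ww_ge0.
  rewrite /ww Ek1; apply: (@L_w _ _ _ _ (1/8) (3/2)).
  + exact: h0.
  + exact: h1.
  + nlia.
  + have := xpow_le h0 h1 (_ : (3 <= k.+1)%N); move=> /(_ ltac:(nlia)); lra.
  + rewrite ee1; lra.
  + lra.
  + lra.
- apply/andP; split; first exact: ww_ge0.
  rewrite /ww Ek2; apply: (@L_w _ _ _ _ (1/4) 1).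
  + exact: h0.
  + exact: h1.
  + nlia.
  + have := xpow_le h0 h1 hk; lra.
  + rewrite ee2; have := xpow_ge0 2 h0; lra.
  + lra.
  + lra.
- rewrite /ww subnn ee0 mulr0 mul0r; lra.
- have n1 : (k.+1 < j)%N by nlia.
  apply: (a_le hq n1 hjd (ltnSn _)).
  rewrite Ek1; apply: L_rA1; [exact: h0 | exact: h1 | done | nlia | nlia | nlia].
- have n1 : (k.+1 < j)%N by nlia.
  apply: (a_le2 hq n1 hjd (ltnSn _)).
  rewrite Ek1 Ek2.
  have E3 : (d - k = (d - k.+1).+1)%N by nlia.
  have E4 : (j - k = (j - k.+1).+1)%N by nlia.
  rewrite E3 E4; apply: L_rA2; [exact: h0 | exact: h1 | done | done | nlia | nlia | nlia].
- move=> kpos; have [k' Ek] : exists k', k = k'.+1 by exists k.-1; nlia.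
  subst k; rename k' into k; rewrite /=.
  have n1 : (k < j)%N by nlia.
  have n2 : (k < k.+3)%N by nlia.
  apply: (a_le hq n1 hjd n2).
  have E5 : (k.+3 - k = 3)%N by nlia.
  rewrite E5; apply: L_cA; [exact: h0 | exact: h1 | done | nlia | nlia | nlia].
- move=> h hh.
  have -> : aa q d j k.+2 h.+1 / 4 = 1/4 * aa q d j k.+2 h.+1 by rewrite mulrC mul1r.
  have n1 : (h < j)%N by nlia.
  have n2 : (h < k.+2)%N by nlia.
  apply: (a_le hq n1 hjd n2).
  apply: L_r4; [exact: h0 | exact: h1 | nlia | nlia | nlia].
- lra.
Qed.

Lemma caseB q d i k m : (2 <= q)%N -> (1 <= i)%N -> d = (i + m)%N -> (k.+3 <= m)%N ->
  (4 <= m)%N ->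
  \sum_(0 <= h < k.+2) aa q d k.+2 m h * (1 + ww q m h) +
    aa q d k.+2 m k.+2 * ww q m k.+2 < aa q d k.+2 m k.+2.
Proof.
move=> hq hi hd hkm hm.
have h0 := xq_pos hq; have h1 := xq_le hq; have [b2 b3 b4 b5] := xb h0 h1.
have hjd : (k.+2 <= d)%N by nlia.
have apos : 0 < aa q d k.+2 m k.+2.
  rewrite /aa normr_gt0; apply: Tt_neq0 => //; nlia.
have Ek1 : (k.+2 - k.+1 = 1)%N by rewrite subSS subSnn.
have Ek2 : (k.+2 - k = 2)%N by nlia.
have m3 : (3 <= m)%N by nlia.
apply: (le_lt_trans (main_bound (a := aa q d k.+2 m) (w := ww q m) (k := k)
   (r1 := 9/32) (r2 := 1/16) (c := 1/4) (W0 := 3/10) (W1 := 3/5) (W2 := 1)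
   _ _ _ _ _ _ _ _ _ _)); last lra.
- move=> h; exact: normr_ge0.
- move=> h _; rewrite ww_ge0 // ww_le1 //.
- apply/andP; split; first exact: ww_ge0.
  rewrite /ww; apply: (@L_w _ _ _ _ (1/2) (9/8)).
  + exact: h0.
  + exact: h1.
  + exact: m3.
  + have := xpow_le h0 h1 (_ : (1 <= k.+1)%N); move=> /(_ isT); rewrite expr1; lra.
  + have := ee_hi2 h0 h1 (_ : (2 <= m - k.+1)%N); move=> /(_ ltac:(nlia)); lra.
  + lra.
  + lra.
- apply/andP; split; [exact: ww_ge0 | exact: ww_le1].
- rewrite /ww; case: (boolP (m - k.+2 == 1)%N) => [/eqP E | E].
    rewrite E; apply: (@L_w _ _ _ _ (1/8) (3/2)).
    + exact: h0.
    + exact: h1.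
    + exact: m3.
    + have := xpow_le h0 h1 (_ : (3 <= k.+2)%N); move=> /(_ ltac:(nlia)); lra.
    + rewrite ee1; lra.
    + lra.
    + lra.
  apply: (@L_w _ _ _ _ (1/4) (9/8)).
  + exact: h0.
  + exact: h1.
  + exact: m3.
  + have := xpow_le h0 h1 (_ : (2 <= k.+2)%N); move=> /(_ isT); lra.
  + have := ee_hi2 h0 h1 (_ : (2 <= m - k.+2)%N); move=> /(_ ltac:(nlia)); lra.
  + lra.
  + lra.
- have n2 : (k.+1 < m)%N by nlia.
  apply: (a_le hq (ltnSn _) hjd n2).
  rewrite Ek1; apply: L_rB1; [exact: h0 | exact: h1 | nlia | nlia | nlia | nlia].
- have n2 : (k.+1 < m)%N by nlia.
  apply: (a_le2 hq (ltnSn _) hjd n2).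
  rewrite Ek1 Ek2.
  have E3 : (d - k = (d - k.+1).+1)%N by nlia.
  have E4 : (m - k = (m - k.+1).+1)%N by nlia.
  rewrite E3 E4; apply: L_rB2; [exact: h0 | exact: h1 | nlia | nlia | nlia | nlia | nlia].
- move=> kpos; have [k' Ek] : exists k', k = k'.+1 by exists k.-1; nlia.
  subst k; rename k' into k; rewrite /=.
  have n1 : (k < k.+3)%N by nlia.
  have n2 : (k < m)%N by nlia.
  apply: (a_le hq n1 hjd n2).
  apply: L_r4; [exact: h0 | exact: h1 | nlia | nlia | nlia].
- move=> h hh.
  have -> : aa q d k.+2 m h.+1 / 4 = 1/4 * aa q d k.+2 m h.+1 by rewrite mulrC mul1r.
  have n1 : (h < k.+2)%N by nlia.
  have n2 : (h < m)%N by nlia.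
  apply: (a_le hq n1 hjd n2).
  apply: L_r4; [exact: h0 | exact: h1 | nlia | nlia | nlia].
- lra.
Qed.

Unset Implicit Arguments.

Theorem lemma5p5 (q d i j : nat) :
  prime_power q -> (2 <= q)%N -> (6 <= d)%N ->
  ((1 <= i <= d - 5)%N /\ (2 <= j <= d)%N \/
   i = (d - 4)%N /\ (2 <= j <= 4)%N) ->
  `|Qeig q d j (i.+1)| < `|Qeig q d j i|.
Proof.
move=> _ hq hd hc.
have hi : (1 <= i)%N by case: hc => [[]|[]] *; nlia.
have hm4 : (4 <= d - i)%N by case: hc => [[]|[]] *; nlia.
have hj2 : (2 <= j)%N by case: hc => [[]|[]] *; nlia.
have hjd : (j <= d)%N by case: hc => [[]|[]] *; nlia.
have [n En] : exists n, (d - i = n.+1)%N by exists (d - i).-1; nlia.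
have En' : (d - i.+1 = n)%N by nlia.
rewrite !QeigE En En'; apply: (@reduce q d j n hq).
case: (boolP (n.+1 <= j)%N) => hnj.
  have -> : minn j n.+1 = n.+1 by nlia.
  have [k Ek] : exists k, n = k.+1 by exists n.-1; nlia.
  rewrite Ek; apply: (caseA hq hi); nlia.
have -> : minn j n.+1 = j by nlia.
have [k Ek] : exists k, j = k.+2 by exists j.-2; nlia.
subst j; apply: (caseB hq hi); nlia.
Qed.
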